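(* Consider momentum gradient flow with parameter $\lambda>0$ on a 2-layer diagonal linear network as described in the context. Assume the trajectory $(u_t,v_t)$ is bounded and that the asymptotic balancedness $\Delta_\infty=\lim_{t\to\infty}\Delta_t$ has nonzero coordinates. Then there exists $T\ge0$ such that for all $t\ge T$, $\Delta_t$ has all coordinates positive, and the predictors $\theta_t=u_t\odot v_t$ follow a momentum mirror flow with time-varying potentials $\Phi_t$: $$\lambda\frac{\mathrm{d}^2\nabla\Phi_t(\theta_t)}{\mathrm{d}t^2}+\frac{\mathrm{d}\nabla\Phi_t(\theta_t)}{\mathrm{d}t}+\nabla L(\theta_t)=0,\qquad t\ge T.$$ Furthermore, if the balancedness $\Delta_t$ has nonzero coordinates for all $t\in[0,+\infty]$, this momentum mirror flow holds for every $t\ge0$.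
   Context: Data $x_1,\dots,x_n\in\mathbb{R}^d$, $y\in\mathbb{R}^n$, loss $L(\theta)=\frac{1}{2n}\sum_{i=1}^n(y_i-\langle x_i,\theta\rangle)^2$. Vector operations are coordinate-wise. Momentum gradient flow on the diagonal linear network: $(u_t,v_t)$ solves $\lambda\ddot u_t+\dot u_t+\nabla L(\theta_t)\odot v_t=0$, $\lambda\ddot v_t+\dot v_t+\nabla L(\theta_t)\odot u_t=0$, $\theta_t=u_t\odot v_t$, with $\dot u_0=\dot v_0=0$ and $|u_0^2-v_0^2|$ having all coordinates nonzero. $w_{\pm,t}=u_t\pm v_t$, $\Delta_t=|u_t^2-v_t^2|=|w_{+,t}w_{-,t}|$. Hyperbolic entropy: for $\Delta\in(0,\infty)^d$, $\psi_\Delta(\theta)=\frac14\sum_{i=1}^d\big(2\theta_i\mathrm{arcsinh}(2\theta_i/\Delta_i)-\sqrt{4\theta_i^2+\Delta_i^2}+\Delta_i\big)$. The potentials are defined (for $t$ with $\Delta_t>0$) by $\Phi_t(\theta)=\psi_{\Delta_t}(\theta)-\langle\phi_t,\theta\rangle$, where $\xi_t=-\int_0^t\nabla L(\theta_s)(1-e^{-(t-s)/\lambda})\,\mathrm{d}s$, $\alpha_{\pm,t}=w_{\pm,t}\odot\exp(\mp\xi_t)$, and $\phi_t=\frac12\mathrm{arcsinh}\Big(\frac{\alpha_{+,t}^2-\alpha_{-,t}^2}{2\Delta_t}\Big)$. *)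

(* Defs.v *)
From Stdlib Require Import Reals Lra.
From Coquelicot Require Import Coquelicot.
Open Scope R_scope.

(* Vectors of R^d are represented as functions nat -> R; only coordinates
   0 <= j < d are meaningful. Data x_i are rows  x i : nat -> R, i < n. *)

Fixpoint sumR (m : nat) (f : nat -> R) : R :=
  match m with
  | O => 0
  | S m' => sumR m' f + f m'
  end.

Definition dotR (d : nat) (a b : nat -> R) : R := sumR d (fun k => a k * b k).

Definition upd (theta : nat -> R) (i : nat) (z : R) : nat -> R :=
  fun k => if Nat.eqb k i then z else theta k.

Definition grad (F : (nat -> R) -> R) (theta : nat -> R) (i : nat) : R :=
  Derive (fun z => F (upd theta i z)) (theta i).

Definition loss (n d : nat) (x : nat -> nat -> R) (y : nat -> R)
  (theta : nat -> R) : R :=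
  / (2 * INR n) * sumR n (fun i => (y i - dotR d (x i) theta) ^ 2).

Definition psi (d : nat) (Delta theta : nat -> R) : R :=
  / 4 * sumR d (fun i =>
    2 * theta i * arcsinh (2 * theta i / Delta i)
    - sqrt (4 * theta i ^ 2 + Delta i ^ 2) + Delta i).

(* For interior points this is the usual derivative; at the left end point
   of an interval [T, +oo) it is the right derivative. *)
Definition deriv_within (D : R -> Prop) (f : R -> R) (t l : R) : Prop :=
  filterlim (fun s => (f s - f t) / (s - t))
    (within (fun s => D s /\ s <> t) (locally t)) (locally l).

Definition from (T : R) : R -> Prop := fun s => T <= s.

Definition theta_of (u v : R -> nat -> R) (t : R) : nat -> R :=
  fun j => u t j * v t j.

Definition Delta_of (u v : R -> nat -> R) (t : R) : nat -> R :=
  fun j => Rabs (u t j ^ 2 - v t j ^ 2).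

Definition xi_of (n d : nat) (x : nat -> nat -> R) (y : nat -> R) (lam : R)
  (u v : R -> nat -> R) (t : R) : nat -> R :=
  fun j => - RInt (fun s => grad (loss n d x y) (theta_of u v s) j
                            * (1 - exp (- (t - s) / lam))) 0 t.

Definition phi_of (n d : nat) (x : nat -> nat -> R) (y : nat -> R) (lam : R)
  (u v : R -> nat -> R) (t : R) : nat -> R :=
  fun j =>
    let ap := (u t j + v t j) * exp (- xi_of n d x y lam u v t j) in
    let am := (u t j - v t j) * exp (xi_of n d x y lam u v t j) in
    / 2 * arcsinh ((ap ^ 2 - am ^ 2) / (2 * Delta_of u v t j)).

Definition Phi_of (n d : nat) (x : nat -> nat -> R) (y : nat -> R) (lam : R)
  (u v : R -> nat -> R) (t : R) (theta : nat -> R) : R :=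
  psi d (Delta_of u v t) theta - dotR d (phi_of n d x y lam u v t) theta.

Definition momentum_mirror_flow_on (D : R -> Prop) (n d : nat)
  (x : nat -> nat -> R) (y : nat -> R) (lam : R) (u v : R -> nat -> R) : Prop :=
  exists G1 G2 : R -> nat -> R,
    forall t, D t -> forall j, (j < d)%nat ->
      deriv_within D
        (fun s => grad (Phi_of n d x y lam u v s) (theta_of u v s) j) t (G1 t j)
      /\ deriv_within D (fun s => G1 s j) t (G2 t j)
      /\ lam * G2 t j + G1 t j + grad (loss n d x y) (theta_of u v t) j = 0.

(* Main.v *)
Require Import Defs.
From Stdlib Require Import Reals Lra Lia.
From Coquelicot Require Import Coquelicot.
Open Scope R_scope.

Lemma ball_R (a e b : R) : ball a e b <-> Rabs (b - a) < e.
Proof. unfold ball; simpl; unfold AbsRing_ball, abs, minus, plus, opp; simpl. tauto. Qed.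

Lemma deriv_within_of_derive (D : R -> Prop) (f h : R -> R) (t l : R) :
  (forall s, D s -> f s = h s) -> D t -> derivable_pt_lim h t l ->
  deriv_within D f t l.
Proof.
  intros Hfh Dt Hd. unfold deriv_within. apply filterlim_locally. intros eps.
  destruct (Hd eps (cond_pos eps)) as [delta Hdel].
  exists delta. intros s Hs [Ds Hne]. apply ball_R in Hs. apply ball_R.
  rewrite (Hfh s Ds), (Hfh t Dt).
  assert (Hne' : s - t <> 0) by lra.
  specialize (Hdel (s - t) Hne' Hs).
  assert (E : t + (s - t) = s :> R) by ring. rewrite E in Hdel. exact Hdel.
Qed.

Lemma deriv_within_cont0 f t l : 0 <= t -> deriv_within (from 0) f t l ->
  forall eps, 0 < eps -> exists delta, 0 < delta /\
   forall s, 0 <= s -> Rabs (s - t) < delta -> Rabs (f s - f t) < eps.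
Proof.
  intros Ht Hd eps Heps. unfold deriv_within in Hd.
  pose proof (proj1 (filterlim_locally (U:=R_UniformSpace) (fun s : R => (f s - f t) / (s - t)) l) Hd) as Hd2; clear Hd; rename Hd2 into Hd.
  destruct (Hd (mkposreal 1 Rlt_0_1)) as [delta Hdel]. simpl in Hdel.
  set (K := Rabs l + 1).
  assert (HK : 0 < K) by (unfold K; pose proof (Rabs_pos l); lra).
  exists (Rmin delta (eps / K)). split.
  { apply Rmin_pos. apply cond_pos. apply Rdiv_lt_0_compat; lra. }
  intros s Hs Hst.
  destruct (Req_dec s t) as [->|Hne].
  { replace (f t - f t) with 0 by ring. rewrite Rabs_R0; lra. }
  assert (Hb : ball t delta s).
  { apply ball_R. eapply Rlt_le_trans; [exact Hst| apply Rmin_l]. }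
  specialize (Hdel s Hb (conj Hs Hne)). pose proof (proj1 (ball_R _ _ _) Hdel) as Hdel2; clear Hdel; rename Hdel2 into Hdel; simpl in Hdel.
  assert (Hq : Rabs ((f s - f t) / (s - t)) <= K).
  { unfold K. replace ((f s - f t) / (s - t)) with (((f s - f t) / (s - t) - l) + l) by ring.
    eapply Rle_trans; [apply Rabs_triang|]. lra. }
  assert (Hst' : Rabs (s - t) < eps / K).
  { eapply Rlt_le_trans; [exact Hst| apply Rmin_r]. }
  replace (f s - f t) with ((f s - f t) / (s - t) * (s - t)) by (field; lra).
  rewrite Rabs_mult.
  assert (0 < Rabs (s - t)) by (apply Rabs_pos_lt; lra).
  apply Rle_lt_trans with (K * Rabs (s - t)).
  { apply Rmult_le_compat_r; lra. }
  apply Rmult_lt_reg_l with (/ K). apply Rinv_0_lt_compat; lra.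
  replace (/ K * (K * Rabs (s - t))) with (Rabs (s - t)) by (field; lra).
  replace (/ K * eps) with (eps / K) by (unfold Rdiv; ring). exact Hst'.
Qed.

Lemma Rmax_lip a b : Rabs (Rmax a 0 - Rmax b 0) <= Rabs (a - b).
Proof.
  unfold Rmax; destruct (Rle_dec a 0); destruct (Rle_dec b 0);
  unfold Rabs; repeat destruct (Rcase_abs _); lra.
Qed.

Lemma cont_Rmax f : (forall t, 0 <= t -> exists l, deriv_within (from 0) f t l) ->
  forall t, continuous (fun s => f (Rmax s 0)) t.
Proof.
  intros Hf t. apply filterlim_locally. intros eps.
  assert (Ht : 0 <= Rmax t 0) by apply Rmax_r.
  destruct (Hf _ Ht) as [l Hl].
  destruct (deriv_within_cont0 f _ l Ht Hl eps (cond_pos eps)) as [delta [Hd Hdel]].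
  exists (mkposreal delta Hd). intros s Hs. apply ball_R in Hs. simpl in Hs.
  apply ball_R. apply Hdel. apply Rmax_r.
  eapply Rle_lt_trans; [apply Rmax_lip|exact Hs].
Qed.

Lemma is_derive_cst (c z : R) : is_derive (fun _ => c) z 0.
Proof. apply is_derive_Reals. apply derivable_pt_lim_const. Qed.

Lemma is_derive_idR (z : R) : is_derive (fun x => x) z 1.
Proof. apply is_derive_Reals. apply derivable_pt_lim_id. Qed.

Lemma dR_eq (f : R -> R) (x a b : R) : is_derive f x a -> a = b -> is_derive f x b.
Proof. intros H <-. exact H. Qed.
Lemma dR_plus (f g : R -> R) x a b : is_derive f x a -> is_derive g x b ->
  is_derive (fun z => f z + g z) x (a + b).
Proof. intros Ha Hb. exact (is_derive_plus f g x a b Ha Hb). Qed.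
Lemma dR_minus (f g : R -> R) x a b : is_derive f x a -> is_derive g x b ->
  is_derive (fun z => f z - g z) x (a - b).
Proof. intros Ha Hb. exact (is_derive_minus f g x a b Ha Hb). Qed.
Lemma dR_opp (f : R -> R) x a : is_derive f x a ->
  is_derive (fun z => - f z) x (- a).
Proof. intros Ha. exact (is_derive_opp f x a Ha). Qed.
Lemma dR_mult (f g : R -> R) x a b : is_derive f x a -> is_derive g x b ->
  is_derive (fun z => f z * g z) x (a * g x + f x * b).
Proof. intros Ha Hb. exact (is_derive_mult f g x a b Ha Hb Rmult_comm). Qed.
Lemma dR_comp (f g : R -> R) x a b : is_derive f (g x) a -> is_derive g x b ->
  is_derive (fun z => f (g z)) x (b * a).
Proof. intros Ha Hb. exact (is_derive_comp f g x a b Ha Hb). Qed.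

Lemma sumR_ext m f g : (forall i, (i < m)%nat -> f i = g i) -> sumR m f = sumR m g.
Proof.
  induction m; simpl; intros H; auto.
  rewrite IHm by (intros; apply H; lia). rewrite H by lia. reflexivity.
Qed.

Lemma is_derive_sumR m (F F' : nat -> R -> R) z :
  (forall i, (i < m)%nat -> is_derive (F i) z (F' i z)) ->
  is_derive (fun z => sumR m (fun i => F i z)) z (sumR m (fun i => F' i z)).
Proof.
  induction m; simpl; intros H.
  - apply is_derive_cst.
  - apply (is_derive_plus (fun z => sumR m (fun i => F i z)) (F m)).
    apply IHm; intros; apply H; lia. apply H; lia.
Qed.

Lemma continuous_sumR m (F : nat -> R -> R) t :
  (forall i, (i < m)%nat -> continuous (F i) t) ->
  continuous (fun s => sumR m (fun i => F i s)) t.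
Proof.
  induction m; simpl; intros H.
  - apply continuous_const.
  - apply (continuous_plus (fun s => sumR m (fun i => F i s)) (F m)).
    apply IHm; intros; apply H; lia. apply H; lia.
Qed.

Lemma sumR_zero m : sumR m (fun _ => 0) = 0.
Proof. induction m; simpl; try rewrite IHm; ring. Qed.

Lemma sumR_delta m j a : (j < m)%nat ->
  sumR m (fun i => if Nat.eqb i j then a else 0) = a.
Proof.
  induction m; simpl; intros H. lia.
  destruct (Nat.eqb_spec m j).
  - subst. rewrite sumR_ext with (g := fun _ => 0).
    + rewrite sumR_zero. ring.
    + intros i Hi. destruct (Nat.eqb_spec i j); [lia|auto].
  - rewrite IHm by lia. ring.
Qed.

Lemma is_derive_upd_coord (th : nat -> R) j i z :
  is_derive (fun z => upd th j z i) z (if Nat.eqb i j then 1 else 0).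
Proof.
  unfold upd. destruct (Nat.eqb i j). apply is_derive_idR. apply is_derive_cst.
Qed.

Lemma is_derive_dot d (a th : nat -> R) j z : (j < d)%nat ->
  is_derive (fun z => dotR d a (upd th j z)) z (a j).
Proof.
  intros Hj. unfold dotR.
  rewrite <- (sumR_delta d j (a j)) by exact Hj.
  apply (is_derive_sumR d (fun i z => a i * upd th j z i)
     (fun i z => if Nat.eqb i j then a j else 0) z).
  intros i _.
  eapply dR_eq. apply (dR_mult (fun _ => a i)). apply is_derive_cst. apply is_derive_upd_coord.
  destruct (Nat.eqb_spec i j); subst; ring.
Qed.

Lemma dotR_upd_same d a th j : dotR d a (upd th j (th j)) = dotR d a th.
Proof.
  unfold dotR. apply sumR_ext. intros i _. unfold upd.
  destruct (Nat.eqb_spec i j); subst; reflexivity.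
Qed.

Definition Gl (n d : nat) (x : nat -> nat -> R) (y : nat -> R) (th : nat -> R) (j : nat) : R :=
  / (2 * INR n) * sumR n (fun i => 2 * (y i - dotR d (x i) th) * (- x i j)).

Lemma grad_loss_eq n d x y th j : (j < d)%nat ->
  grad (loss n d x y) th j = Gl n d x y th j.
Proof.
  intros Hj. unfold grad, loss. apply is_derive_unique.
  eapply dR_eq.
  apply (dR_mult (fun _ => / (2 * INR n))). apply is_derive_cst.
  apply (is_derive_sumR n (fun i z => (y i - dotR d (x i) (upd th j z)) ^ 2)
     (fun i z => 2 * (y i - dotR d (x i) (upd th j z)) * (- x i j))).
  intros i _.
  eapply dR_eq. apply is_derive_pow.
  apply (dR_minus (fun _ => y i)). apply is_derive_cst. apply is_derive_dot. exact Hj.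
  simpl. ring.
  unfold Gl. rewrite Rmult_0_l, Rplus_0_l. f_equal. apply sumR_ext.
  intros i _. rewrite dotR_upd_same. reflexivity.
Qed.

Lemma is_derive_arcsinh w : is_derive arcsinh w (/ sqrt (w ^ 2 + 1)).
Proof. apply is_derive_Reals. apply derivable_pt_lim_arcsinh. Qed.

Definition pterm (D z : R) : R :=
  2 * z * arcsinh (2 * z / D) - sqrt (4 * z ^ 2 + D ^ 2) + D.

Lemma is_derive_pterm (D z0 : R) : 0 < D ->
  is_derive (fun z => pterm D z) z0 (2 * arcsinh (2 * z0 / D)).
Proof.
  intros HD. unfold pterm.
  assert (Hlin : is_derive (fun z => 2 * z / D) z0 (2 / D)).
  { auto_derive. auto. field. lra. }
  assert (Harc := dR_comp arcsinh (fun z => 2 * z / D) z0 _ _ (is_derive_arcsinh _) Hlin).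
  assert (Hpos : 0 < 4 * z0 ^ 2 + D ^ 2) by nra.
  assert (Hsq : is_derive (fun z => sqrt (4 * z ^ 2 + D ^ 2)) z0
                   (4 * z0 / sqrt (4 * z0 ^ 2 + D ^ 2))).
  { auto_derive. lra. replace (4 * (z0 * (z0 * 1)) + D * (D * 1)) with (4 * z0 ^ 2 + D ^ 2) by ring. field. apply Rgt_not_eq. apply sqrt_lt_R0. lra. }
  assert (H2z : is_derive (fun z => 2 * z) z0 2).
  { auto_derive. auto. ring. }
  eapply dR_eq.
  apply (dR_plus (fun z => 2 * z * arcsinh (2 * z / D) - sqrt (4 * z ^ 2 + D ^ 2)) (fun _ => D)).
  apply (dR_minus (fun z => 2 * z * arcsinh (2 * z / D))).
  apply (dR_mult (fun z => 2 * z) (fun z => arcsinh (2 * z / D))). exact H2z. exact Harc.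
  exact Hsq. apply is_derive_cst.
  set (S := sqrt (4 * z0 ^ 2 + D ^ 2)).
  assert (HS : 0 < S) by (apply sqrt_lt_R0; lra).
  assert (HS2 : S * S = 4 * z0 ^ 2 + D ^ 2) by (apply sqrt_sqrt; lra).
  assert (E : (2 * z0 / D) ^ 2 + 1 = (S / D) ^ 2).
  { replace ((S / D) ^ 2) with ((S * S) / (D * D)) by (field; lra). rewrite HS2. field. lra. }
  rewrite E. rewrite sqrt_pow2.
  - field. split; lra.
  - apply Rlt_le, Rdiv_lt_0_compat; lra.
Qed.

Lemma grad_Phi d Del phi th j : (j < d)%nat -> 0 < Del j ->
  grad (fun th => psi d Del th - dotR d phi th) th j
  = / 2 * arcsinh (2 * th j / Del j) - phi j.
Proof.
  intros Hj HD. unfold grad, psi. apply is_derive_unique.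
  eapply dR_eq.
  apply (dR_minus (fun z => / 4 * sumR d (fun i => 2 * upd th j z i * arcsinh (2 * upd th j z i / Del i) -
      sqrt (4 * upd th j z i ^ 2 + Del i ^ 2) + Del i))).
  apply (dR_mult (fun _ => / 4)). apply is_derive_cst.
  apply (is_derive_sumR d (fun i z => 2 * upd th j z i * arcsinh (2 * upd th j z i / Del i) -
      sqrt (4 * upd th j z i ^ 2 + Del i ^ 2) + Del i)
      (fun i z => if Nat.eqb i j then 2 * arcsinh (2 * z / Del j) else 0)).
  2: apply is_derive_dot; exact Hj.
  - intros i _. destruct (Nat.eqb_spec i j).
    + subst. eapply is_derive_ext; [|apply (is_derive_pterm (Del j) (th j) HD)].
      intros t. unfold pterm, upd. rewrite Nat.eqb_refl. reflexivity.
    + eapply is_derive_ext; [|apply (is_derive_cst (pterm (Del i) (th i)))].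
      intros t. unfold pterm, upd. rewrite (proj2 (Nat.eqb_neq _ _) n). reflexivity.
  - rewrite sumR_delta by exact Hj. field.
Qed.

Lemma phi_identity (u v xi : R) : u ^ 2 - v ^ 2 <> 0 ->
  / 2 * arcsinh (2 * (u * v) / Rabs (u ^ 2 - v ^ 2)) -
  / 2 * arcsinh ((((u + v) * exp (- xi)) ^ 2 - ((u - v) * exp xi) ^ 2)
                 / (2 * Rabs (u ^ 2 - v ^ 2))) = xi.
Proof.
  intros Hne.
  set (a := u + v). set (b := u - v).
  assert (Hab : u ^ 2 - v ^ 2 = a * b) by (unfold a, b; ring).
  rewrite Hab in *. rewrite Rabs_mult.
  assert (Ha : a <> 0) by (intro H; apply Hne; rewrite H; ring).
  assert (Hb : b <> 0) by (intro H; apply Hne; rewrite H; ring).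
  set (p := Rabs a). set (q := Rabs b).
  assert (Hp : 0 < p) by (apply Rabs_pos_lt; exact Ha).
  assert (Hq : 0 < q) by (apply Rabs_pos_lt; exact Hb).
  assert (Hp2 : p * p = a * a) by (unfold p; rewrite <- Rabs_mult; apply Rabs_right; nra).
  assert (Hq2 : q * q = b * b) by (unfold q; rewrite <- Rabs_mult; apply Rabs_right; nra).
  assert (Huv : 2 * (u * v) = (a * a - b * b) / 2) by (unfold a, b; field).
  set (L := ln (p / q)).
  assert (HeL : exp L = p / q) by (apply exp_ln; apply Rdiv_lt_0_compat; lra).
  set (E := exp xi).
  assert (HE : 0 < E) by apply exp_pos.
  assert (H1 : 2 * (u * v) / (p * q) = sinh L).
  { unfold sinh. rewrite exp_Ropp, HeL, Huv, <- Hp2, <- Hq2. field. lra. }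
  assert (H2 : ((a * exp (- xi)) ^ 2 - (b * E) ^ 2) / (2 * (p * q)) = sinh (L - 2 * xi)).
  { assert (HM : exp (L - 2 * xi) = p / q * / E * / E).
    { replace (L - 2 * xi) with (L + (- xi + - xi)) by ring.
      rewrite !exp_plus, HeL, !exp_Ropp. fold E. ring. }
    assert (HM' : exp (- (L - 2 * xi)) = / (p / q * / E * / E)).
    { rewrite exp_Ropp, HM. reflexivity. }
    unfold sinh. rewrite HM, HM', exp_Ropp. fold E.
    replace ((a * / E) ^ 2 - (b * E) ^ 2) with ((a * a) * / E * / E - (b * b) * E * E)
      by (field; lra).
    rewrite <- Hp2, <- Hq2. field. repeat split; lra. }
  rewrite H1, H2, !arcsinh_sinh. field.
Qed.

Lemma cR_plus (f g : R -> R) t : continuous f t -> continuous g t -> continuous (fun s => f s + g s) t.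
Proof. intros. exact (continuous_plus f g t H H0). Qed.
Lemma cR_minus (f g : R -> R) t : continuous f t -> continuous g t -> continuous (fun s => f s - g s) t.
Proof. intros. exact (continuous_minus f g t H H0). Qed.
Lemma cR_mult (f g : R -> R) t : continuous f t -> continuous g t -> continuous (fun s => f s * g s) t.
Proof. intros. exact (continuous_mult f g t H H0). Qed.
Lemma cR_const (c t : R) : continuous (fun _ : R => c) t.
Proof. apply continuous_const. Qed.

Section Main.
Variables (n d : nat) (x : nat -> nat -> R) (y : nat -> R) (lam : R) (u v : R -> nat -> R).
Hypothesis Hlam : 0 < lam.
Hypothesis Hu : forall t, 0 <= t -> forall k, (k < d)%nat -> exists l, deriv_within (from 0) (fun s => u s k) t l.
Hypothesis Hv : forall t, 0 <= t -> forall k, (k < d)%nat -> exists l, deriv_within (from 0) (fun s => v s k) t l.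

Definition gt j s := grad (loss n d x y) (theta_of u v (Rmax s 0)) j.
Definition Bf j s := RInt (fun r => gt j r * exp (r / lam)) 0 s.
Definition Af j s := RInt (gt j) 0 s.
Definition hf j s := - Af j s + exp (- s / lam) * Bf j s.
Definition G1f j s := - / lam * exp (- s / lam) * Bf j s.
Definition G2f j s := / lam * / lam * exp (- s / lam) * Bf j s - / lam * gt j s.

Lemma gt_cont j : (j < d)%nat -> forall s, continuous (gt j) s.
Proof.
  intros Hj s. apply (continuous_ext (fun s => Gl n d x y (theta_of u v (Rmax s 0)) j)).
  { intros r. unfold gt. symmetry. apply grad_loss_eq. exact Hj. }
  unfold Gl. apply cR_mult. apply cR_const.
  apply (continuous_sumR n (fun i s => 2 * (y i - dotR d (x i) (theta_of u v (Rmax s 0))) * - x i j)).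
  intros i _. apply cR_mult. 2: apply cR_const.
  apply cR_mult. apply cR_const.
  apply cR_minus. apply cR_const.
  unfold dotR.
  apply (continuous_sumR d (fun k s => x i k * theta_of u v (Rmax s 0) k)).
  intros k Hk. apply cR_mult. apply cR_const. unfold theta_of.
  apply (cR_mult (fun s => u (Rmax s 0) k) (fun s => v (Rmax s 0) k)).
  - apply (cont_Rmax (fun s => u s k)). intros t Ht. apply Hu; auto.
  - apply (cont_Rmax (fun s => v s k)). intros t Ht. apply Hv; auto.
Qed.

Lemma exp_lin_cont (s : R) : continuous (fun r => exp (r / lam)) s.
Proof. apply (ex_derive_continuous (K:=R_AbsRing) (V:=R_NormedModule) (fun r => exp (r / lam))). auto_derive. auto. Qed.

Lemma gte_cont j : (j < d)%nat -> forall s, continuous (fun r => gt j r * exp (r / lam)) s.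
Proof. intros Hj s. apply cR_mult. apply gt_cont; auto. apply exp_lin_cont. Qed.

Lemma derive_RInt0 (f : R -> R) t : (forall s, continuous f s) ->
  is_derive (fun b => RInt f 0 b) t (f t).
Proof.
  intros Hc. apply (is_derive_RInt f (RInt f 0) 0 t).
  - apply filter_forall. intros b. apply (RInt_correct (V:=R_CompleteNormedModule)). apply (ex_RInt_continuous (V:=R_CompleteNormedModule)). intros; auto.
  - apply Hc.
Qed.

Lemma exp_cancel t : exp (- t / lam) * exp (t / lam) = 1.
Proof. rewrite <- exp_plus. replace (- t / lam + t / lam) with 0 by (unfold Rdiv; ring). apply exp_0. Qed.

Lemma is_derive_expm (t : R) : is_derive (fun s => exp (- s / lam)) t (- / lam * exp (- t / lam)).
Proof. auto_derive. auto. unfold Rdiv. ring. Qed.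

Lemma hf_derive j : (j < d)%nat -> forall t, is_derive (hf j) t (G1f j t).
Proof.
  intros Hj t. unfold hf, G1f.
  eapply dR_eq.
  apply (dR_plus (fun s => - Af j s) (fun s => exp (- s / lam) * Bf j s)).
  apply (dR_opp (Af j)). apply derive_RInt0. apply gt_cont; auto.
  apply (dR_mult (fun s => exp (- s / lam)) (Bf j)). apply is_derive_expm.
  apply (derive_RInt0 (fun r => gt j r * exp (r / lam))). apply gte_cont; auto.
  simpl. replace (exp (- t / lam) * (gt j t * exp (t / lam))) with (gt j t * (exp (- t / lam) * exp (t / lam))) by ring.
  rewrite exp_cancel. ring.
Qed.

Lemma G1f_derive j : (j < d)%nat -> forall t, is_derive (G1f j) t (G2f j t).
Proof.
  intros Hj t. unfold G1f, G2f.
  eapply dR_eq.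
  apply (dR_mult (fun s => - / lam * exp (- s / lam)) (Bf j)).
  apply (dR_mult (fun _ => - / lam) (fun s => exp (- s / lam))). apply is_derive_cst. apply is_derive_expm.
  apply (derive_RInt0 (fun r => gt j r * exp (r / lam))). apply gte_cont; auto.
  simpl. replace (- / lam * exp (- t / lam) * (gt j t * exp (t / lam))) with (- / lam * gt j t * (exp (- t / lam) * exp (t / lam))) by ring.
  rewrite exp_cancel. ring.
Qed.

Lemma xi_eq j : (j < d)%nat -> forall t, 0 <= t -> xi_of n d x y lam u v t j = hf j t.
Proof.
  intros Hj t Ht. unfold xi_of, hf, Af, Bf.
  set (c := exp (- t / lam)).
  rewrite (RInt_ext _ (fun s => gt j s - c * (gt j s * exp (s / lam)))).
  2: { intros s Hs. rewrite Rmin_left in Hs by lra. rewrite Rmax_right in Hs by lra.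
       unfold gt. rewrite Rmax_left by lra.
       replace (- (t - s) / lam) with (- t / lam + s / lam) by (field; lra).
       rewrite exp_plus. fold c. assert (E : forall g e c : R, g * (1 - c * e) = g - c * (g * e)) by (intros; ring). apply E. }
  assert (Hex1 : ex_RInt (gt j) 0 t).
  { apply (ex_RInt_continuous (V:=R_CompleteNormedModule)). intros; apply gt_cont; auto. }
  assert (Hex3 : ex_RInt (fun s => gt j s * exp (s / lam)) 0 t).
  { apply (ex_RInt_continuous (V:=R_CompleteNormedModule)). intros; apply gte_cont; auto. }
  assert (Hex2 : ex_RInt (fun s => c * (gt j s * exp (s / lam))) 0 t).
  { apply (ex_RInt_continuous (V:=R_CompleteNormedModule)). intros. apply cR_mult. apply cR_const. apply gte_cont; auto. }
  assert (E1 := RInt_minus (V:=R_CompleteNormedModule) (gt j) (fun s => c * (gt j s * exp (s / lam))) 0 t Hex1 Hex2).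
  assert (E2 := RInt_scal (V:=R_CompleteNormedModule) (fun s => gt j s * exp (s / lam)) 0 t c Hex3).
  assert (E3 : RInt (fun s => gt j s - c * (gt j s * exp (s / lam))) 0 t
             = RInt (gt j) 0 t - c * RInt (fun s => gt j s * exp (s / lam)) 0 t).
  { transitivity (minus (RInt (gt j) 0 t) (scal c (RInt (fun s => gt j s * exp (s / lam)) 0 t))).
    - rewrite <- E2. exact E1.
    - reflexivity. }
  rewrite E3. ring.
Qed.

Lemma Phi_eq j : (j < d)%nat -> forall s, 0 <= s -> Delta_of u v s j <> 0 ->
  grad (Phi_of n d x y lam u v s) (theta_of u v s) j = hf j s.
Proof.
  intros Hj s Hs HD. rewrite <- xi_eq by auto.
  unfold Phi_of. rewrite grad_Phi; auto.
  2: { unfold Delta_of in *. apply Rabs_pos_lt. intro H; apply HD; rewrite H; apply Rabs_R0. }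
  unfold theta_of, phi_of, Delta_of. cbv zeta. apply phi_identity.
  intro H; apply HD; unfold Delta_of; rewrite H; apply Rabs_R0.
Qed.

Lemma flow_on T : 0 <= T -> (forall t, T <= t -> forall j, (j < d)%nat -> Delta_of u v t j <> 0) ->
  momentum_mirror_flow_on (from T) n d x y lam u v.
Proof.
  intros HT HD. exists (fun t j => G1f j t), (fun t j => G2f j t).
  intros t Ht j Hj. unfold from in Ht. split; [|split].
  - apply (deriv_within_of_derive _ _ (hf j)).
    + intros s Hs. unfold from in Hs. apply Phi_eq; auto. lra.
    + exact Ht.
    + apply is_derive_Reals. apply hf_derive; auto.
  - apply (deriv_within_of_derive _ _ (G1f j)).
    + intros s _. reflexivity.
    + exact Ht.
    + apply is_derive_Reals. apply G1f_derive; auto.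
  - unfold G1f, G2f. unfold gt. rewrite Rmax_left by lra. field. lra.
Qed.

End Main.

Lemma uniform_T (P : nat -> R -> Prop) m :
  (forall j, (j < m)%nat -> exists M, forall t, M < t -> P j t) ->
  exists T, 0 <= T /\ forall t, T <= t -> forall j, (j < m)%nat -> P j t.
Proof.
  induction m; intros H.
  - exists 0. split. lra. intros; lia.
  - destruct IHm as [T1 [HT1 H1]]. intros; apply H; lia.
    destruct (H m ltac:(lia)) as [M HM].
    exists (Rmax T1 (M + 1)). split.
    + eapply Rle_trans; [exact HT1| apply Rmax_l].
    + intros t Ht j Hj. destruct (Nat.eq_dec j m).
      * subst. apply HM. pose proof (Rmax_r T1 (M + 1)). lra.
      * apply H1. pose proof (Rmax_l T1 (M + 1)). lra. lia.
Qed.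

Theorem proposition4
  (n d : nat) (x : nat -> nat -> R) (y : nat -> R) (lam : R)
  (u v du dv ddu ddv : R -> nat -> R)
  (Hn : (0 < n)%nat)
  (Hlam : 0 < lam)
  (* (u,v) is a C^2 solution on [0,+oo) of the momentum gradient flow *)
  (Hdu : forall t, 0 <= t -> forall j, (j < d)%nat ->
     deriv_within (from 0) (fun s => u s j) t (du t j) /\
     deriv_within (from 0) (fun s => du s j) t (ddu t j))
  (Hdv : forall t, 0 <= t -> forall j, (j < d)%nat ->
     deriv_within (from 0) (fun s => v s j) t (dv t j) /\
     deriv_within (from 0) (fun s => dv s j) t (ddv t j))
  (Hode : forall t, 0 <= t -> forall j, (j < d)%nat ->
     lam * ddu t j + du t j + grad (loss n d x y) (theta_of u v t) j * v t j = 0 /\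
     lam * ddv t j + dv t j + grad (loss n d x y) (theta_of u v t) j * u t j = 0)
  (Hinit : forall j, (j < d)%nat -> du 0 j = 0 /\ dv 0 j = 0)
  (HDelta0 : forall j, (j < d)%nat -> Delta_of u v 0 j <> 0)
  (* bounded trajectory *)
  (Hbdd : exists M, forall t, 0 <= t -> forall j, (j < d)%nat ->
     Rabs (u t j) <= M /\ Rabs (v t j) <= M)
  (* Delta_oo = lim Delta_t exists and has nonzero coordinates *)
  (HDinf : forall j, (j < d)%nat ->
     exists l, l <> 0 /\ is_lim (fun t => Delta_of u v t j) p_infty l) :
  (exists T, 0 <= T /\
     (forall t, T <= t -> forall j, (j < d)%nat -> 0 < Delta_of u v t j) /\
     momentum_mirror_flow_on (from T) n d x y lam u v)
  /\
  ((forall t, 0 <= t -> forall j, (j < d)%nat -> Delta_of u v t j <> 0) ->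
     momentum_mirror_flow_on (from 0) n d x y lam u v).
Proof.
  assert (Hu : forall t, 0 <= t -> forall k, (k < d)%nat ->
            exists l, deriv_within (from 0) (fun s => u s k) t l).
  { intros t Ht k Hk. exists (du t k). apply Hdu; auto. }
  assert (Hv : forall t, 0 <= t -> forall k, (k < d)%nat ->
            exists l, deriv_within (from 0) (fun s => v s k) t l).
  { intros t Ht k Hk. exists (dv t k). apply Hdv; auto. }
  split.
  - destruct (uniform_T (fun j t => 0 < Delta_of u v t j) d) as [T [HT HTd]].
    + intros j Hj. destruct (HDinf j Hj) as [l [Hl Hlim]].
      apply is_lim_spec in Hlim. simpl in Hlim.
      assert (Hpos : 0 < Rabs l) by (apply Rabs_pos_lt; exact Hl).
      destruct (Hlim (mkposreal _ Hpos)) as [M HM]. exists M.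
      intros t Ht. specialize (HM t Ht). simpl in HM.
      assert (H0 : 0 <= Delta_of u v t j) by (unfold Delta_of; apply Rabs_pos).
      destruct (Req_dec (Delta_of u v t j) 0) as [E|E].
      * rewrite E in HM. rewrite Rminus_0_l, Rabs_Ropp in HM. lra.
      * lra.
    + exists T. split; [exact HT|]. split; [exact HTd|].
      apply flow_on; auto. intros t Ht j Hj. specialize (HTd t Ht j Hj). lra.
  - intros HD. apply flow_on; auto. lra.
Qed.
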